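(* Let $(\mathcal{X},d)$ be a Polish metric space and let $(X_N)_{N\in\mathbb{N}}$ be a Markov chain on $\mathcal{X}$ with transition kernel $(P_x)_{x\in\mathcal{X}}$, where $x\mapsto P_x$ is measurable and each $P_x$ has finite first moment. Assume there exists $\kappa>0$ such that $W_1(P_x,P_y)\le(1-\kappa)\,d(x,y)$ for all $x,y\in\mathcal{X}$, and let $\pi$ be the (unique) invariant probability measure of the chain. Let $T\ge1$ and $T_0\ge0$ be integers and set $\hat\pi(f):=\frac1T\sum_{k=T_0+1}^{T_0+T}f(X_k)$. Then for every Lipschitz function $f:\mathcal{X}\to\mathbb{R}$ and every $x\in\mathcal{X}$, \[ |\mathbb{E}_x\hat\pi(f)-\pi(f)|\le\frac{(1-\kappa)^{T_0+1}}{\kappa T}\,E(x)\,\|f\|_{\mathrm{Lip}}. \]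
   Context: $W_1(\mu_1,\mu_2)=\inf_{\xi}\int\!\!\int d(x,y)\,\xi(dx,dy)$, the infimum over couplings $\xi$ of $\mu_1,\mu_2$, is the $L^1$ Wasserstein distance. $\mathbb{E}_x$ denotes expectation for the chain started at $X_0=x$. The eccentricity is $E(x):=\int_{\mathcal{X}}d(x,y)\,\pi(dy)$. $\|f\|_{\mathrm{Lip}}:=\sup_{x\ne y}|f(x)-f(y)|/d(x,y)$, and $\pi(f)=\int f\,d\pi$. *)

(* Defs.v *)
From HB Require Import structures.
From mathcomp Require Import all_boot all_order all_algebra.
From mathcomp Require Import all_classical all_reals all_analysis.
From mathcomp Require Import measurable_realfun.
Set Implicit Arguments. Unset Strict Implicit. Unset Printing Implicit Defensive.
Import Order.TTheory GRing.Theory Num.Theory.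
Local Open Scope classical_set_scope.
Local Open Scope ring_scope.

Section Defs.
Context {R : realType} {dT : measure_display} {T : measurableType dT}.

Definition is_metric (d : T -> T -> R) : Prop :=
  [/\ forall x y, 0 <= d x y,
      forall x y, d x y = 0 <-> x = y,
      forall x y, d x y = d y x &
      forall x y z, d x z <= d x y + d y z].

Definition d_ball (d : T -> T -> R) (x : T) (e : R) : set T :=
  [set y | d x y < e].

Definition d_open (d : T -> T -> R) (A : set T) : Prop :=
  forall x, A x -> exists2 e : R, 0 < e & d_ball d x e `<=` A.

Definition d_cauchy (d : T -> T -> R) (u : nat -> T) : Prop :=
  forall e : R, 0 < e -> exists N, forall m n, (N <= m)%N -> (N <= n)%N -> d (u m) (u n) < e.

Definition d_complete (d : T -> T -> R) : Prop :=
  forall u : nat -> T, d_cauchy d u ->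
    exists l, forall e : R, 0 < e -> exists N, forall n, (N <= n)%N -> d (u n) l < e.

Definition d_separable (d : T -> T -> R) : Prop :=
  exists D : set T, countable D /\
    forall x (e : R), 0 < e -> exists2 y, D y & d x y < e.

Definition polish_borel (d : T -> T -> R) : Prop :=
  [/\ is_metric d, d_complete d, d_separable d &
      (@measurable _ T) = <<s d_open d >>].

Definition w_coupling (mu1 mu2 : probability T R) (xi : probability (T * T)%type R) : Prop :=
  (forall A, measurable A -> xi (A `*` setT) = mu1 A) /\
  (forall B, measurable B -> xi (setT `*` B) = mu2 B).

Definition W1 (d : T -> T -> R) (mu1 mu2 : probability T R) : \bar R :=
  ereal_inf [set (\int[xi]_z (d z.1 z.2)%:E)%E
            | xi in [set xi | w_coupling mu1 mu2 xi]].

(* Markov operator: (Q g)(x) = E_x g(X_1) = \int g dP_x *)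
Definition markov_op (P : T -> probability T R) (g : T -> \bar R) : T -> \bar R :=
  fun x => (\int[P x]_y g y)%E.

(* E_x f(X_k) = (Q^k f)(x) *)
Definition chain_expect (P : T -> probability T R) (k : nat) (f : T -> R) (x : T) : \bar R :=
  iter k (markov_op P) (fun y => (f y)%:E) x.

Definition expect_hatpi (P : T -> probability T R) (Tn T0 : nat) (f : T -> R) (x : T) : \bar R :=
  (((Tn%:R)^-1)%:E * \sum_(T0.+1 <= k < (T0 + Tn).+1) chain_expect P k f x)%E.

Definition markov_invariant (P : T -> probability T R) (pi : probability T R) : Prop :=
  forall A, measurable A -> (\int[pi]_x P x A)%E = pi A.

Definition eccentricity (d : T -> T -> R) (pi : probability T R) (x : T) : \bar R :=
  (\int[pi]_y (d x y)%:E)%E.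

(* Lipschitz seminorm (with the convention sup of the empty set = 0) *)
Definition lip_norm (d : T -> T -> R) (f : T -> R) : \bar R :=
  ereal_sup ([set 0%E] `|`
    [set e | exists x y, x <> y /\ e = ((`|f x - f y| / d x y)%:E)]).

End Defs.

(* Main.v *)
Require Import Defs.
From HB Require Import structures.
From mathcomp Require Import all_boot all_order all_algebra.
From mathcomp Require Import all_classical all_reals all_analysis.
From mathcomp Require Import measurable_realfun.
From mathcomp Require Import ring lra.
Import Order.TTheory GRing.Theory Num.Theory.
Local Open Scope classical_set_scope.
Local Open Scope ring_scope.
Lemma nnint_le {R : realType} {dT : measure_display} {X : measurableType dT}
  (mu : {measure set X -> \bar R}) (f1 f2 : X -> \bar R) :
  (forall x, (0 <= f1 x)%E) -> (forall x, (f1 x <= f2 x)%E) ->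
  (\int[mu]_x f1 x <= \int[mu]_x f2 x)%E.
Proof.
move=> f10 f12.
have f20 x : (0 <= f2 x)%E by apply: le_trans (f10 x) (f12 x).
rewrite !ge0_integralTE//.
apply: le_ereal_sup => _ [h hf1 <-]; exists h => //= x.
exact: le_trans (hf1 x) (f12 x).
Qed.

Lemma d_open_gt {R : realType} {dT : measure_display} {X : measurableType dT}
  (d : X -> X -> R) (g : X -> R) (l a : R) : 0 <= l ->
  (forall u v, `|g u - g v| <= l * d u v) ->
  d_open d [set y | a < g y].
Proof.
move=> l0 hg y /= ay.
exists ((g y - a) / (l + 1)).
  by apply: divr_gt0; rewrite ?subr_gt0// ltr_wpDl.
move=> z /= dz.
have h1 : g y - g z <= l * d y z by apply: le_trans (ler_norm _) (hg _ _).
have h2 : l * d y z <= l * ((g y - a) / (l + 1)) by rewrite ler_wpM2l// ltW.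
have h3 : l * ((g y - a) / (l + 1)) < g y - a.
  rewrite mulrA ltr_pdivrMr ?ltr_wpDl// mulrC ltr_pM2l ?subr_gt0//.
  by rewrite ltrDl.
lra.
Qed.

Lemma lip_measurable {R : realType} {dT : measure_display} {X : measurableType dT}
  {d : X -> X -> R} {g : X -> R} {l : R} :
  (@measurable _ X) = <<s d_open d >> -> 0 <= l ->
  (forall u v, `|g u - g v| <= l * d u v) ->
  measurable_fun [set: X] g.
Proof.
move=> hs l0 hg.
have mgt a : measurable [set y | a < g y].
  by rewrite hs; apply: sub_sigma_algebra; exact: d_open_gt hg.
apply: (@measurability _ _ _ _ _ _ (@ocitv R)) => //.
move=> _ [_ [[a b] _ <-] <-].
rewrite setTI.
have -> : g @^-1` `]a, b]%classic = [set y | a < g y] `\` [set y | b < g y].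
  apply/seteqP; split => y /=; rewrite in_itv /=.
    by move=> /andP[h1 h2]; split => //; apply/negP; rewrite -leNgt.
  by move=> [h1 /negP]; rewrite -leNgt => h2; apply/andP.
exact: measurableD.
Qed.

Lemma metric_lip1 {R : realType} {dT : measure_display} {X : measurableType dT}
  {d : X -> X -> R} (y0 : X) : is_metric d ->
  forall u v, `|d y0 u - d y0 v| <= 1 * d u v.
Proof.
move=> [d0 _ ds dt] u v; rewrite mul1r.
have h1 := dt y0 u v; have h2 := dt y0 v u; rewrite (ds v u) in h2.
rewrite ler_norml; apply/andP; split; lra.
Qed.

Lemma lip_integrable {R : realType} {dT : measure_display} {X : measurableType dT}
  (d : X -> X -> R) (mu : probability X R) (g : X -> R) (l : R) (y0 : X) :
  (@measurable _ X) = <<s d_open d >> -> is_metric d -> 0 <= l ->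
  (forall u v, `|g u - g v| <= l * d u v) ->
  (\int[mu]_z (d y0 z)%:E < +oo)%E ->
  mu.-integrable [set: X] (EFin \o g).
Proof.
move=> hs hm l0 hg hfin.
have md : measurable_fun [set: X] (d y0) by exact: (lip_measurable hs ler01 (metric_lip1 y0 hm)).
have mg : measurable_fun [set: X] g by exact: lip_measurable hs l0 hg.
have id : mu.-integrable [set: X] (EFin \o d y0).
  apply/integrableP; split; first exact/measurable_EFinP.
  rewrite (eq_integral (fun z => (d y0 z)%:E)) //.
  by move=> z _ /=; rewrite ger0_norm//; case: hm => + _ _ _; apply.
apply: (@le_integrable _ _ _ _ _ measurableT _ (fun z => ((`|g y0|)%:E + l%:E * (d y0 z)%:E)%E)).
- exact/measurable_EFinP.
- move=> z _ /=; rewrite lee_fin.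
  rewrite [X in _ <= X]ger0_norm; last first.
    by apply: addr_ge0 => //; apply: mulr_ge0 => //; case: hm => + _ _ _; apply.
  have := hg z y0.
  case: hm => _ _ ds _; rewrite ds => h.
  have e : g y0 + (g z - g y0) = g z by ring.
  have := ler_normD (g y0) (g z - g y0); rewrite e; lra.
- apply: integrableD => //.
    exact: finite_measure_integrable_cst.
  exact: integrableZl.
Qed.

Lemma marginal_fst {R : realType} {dT : measure_display} {X : measurableType dT}
  {mu1 mu2 : probability X R} {xi : probability (X * X)%type R} {g : X -> R} :
  w_coupling mu1 mu2 xi -> measurable_fun [set: X] g ->
  mu1.-integrable [set: X] (EFin \o g) ->
  xi.-integrable [set: X * X] (fun p => (g p.1)%:E) /\
  (\int[xi]_p (g p.1)%:E = \int[mu1]_z (g z)%:E)%E.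
Proof.
move=> [h1 _] mg ig.
have pf A : measurable A -> pushforward xi fst A = mu1 A.
  move=> mA; rewrite /pushforward -h1//; congr (xi _).
  by apply/seteqP; split => p /=; [move=> ?; split|move=> []].
have mgf : measurable_fun [set: X * X] (fun p : X * X => (g p.1)%:E).
  by apply/measurable_EFinP; exact: measurableT_comp mg measurable_fst.
have ixi : xi.-integrable [set: X * X] (fun p => (g p.1)%:E).
  apply/integrableP; split => //.
  move/integrableP: ig => [_]; apply: le_lt_trans; rewrite le_eqVlt; apply/orP; left; apply/eqP.
  rewrite (eq_measure_integral (pushforward xi fst)); last by move=> A mA _; symmetry; apply: pf.
  rewrite ge0_integral_pushforward//; last first.
    exact/measurableT_comp/measurable_EFinP.
split => //.
rewrite (eq_measure_integral (pushforward xi fst)); last by move=> A mA _; symmetry; apply: pf.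
rewrite integral_pushforward//; last exact/measurable_EFinP.
Qed.

Lemma marginal_snd {R : realType} {dT : measure_display} {X : measurableType dT}
  {mu1 mu2 : probability X R} {xi : probability (X * X)%type R} {g : X -> R} :
  w_coupling mu1 mu2 xi -> measurable_fun [set: X] g ->
  mu2.-integrable [set: X] (EFin \o g) ->
  xi.-integrable [set: X * X] (fun p => (g p.2)%:E) /\
  (\int[xi]_p (g p.2)%:E = \int[mu2]_z (g z)%:E)%E.
Proof.
move=> [_ h1] mg ig.
have pf A : measurable A -> pushforward xi snd A = mu2 A.
  move=> mA; rewrite /pushforward -h1//; congr (xi _).
  by apply/seteqP; split => p /=; [move=> ?; split|move=> []].
have mgf : measurable_fun [set: X * X] (fun p : X * X => (g p.2)%:E).
  by apply/measurable_EFinP; exact: measurableT_comp mg measurable_snd.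
have ixi : xi.-integrable [set: X * X] (fun p => (g p.2)%:E).
  apply/integrableP; split => //.
  move/integrableP: ig => [_]; apply: le_lt_trans; rewrite le_eqVlt; apply/orP; left; apply/eqP.
  rewrite (eq_measure_integral (pushforward xi snd)); last by move=> A mA _; symmetry; apply: pf.
  rewrite ge0_integral_pushforward//; last first.
    exact/measurableT_comp/measurable_EFinP.
split => //.
rewrite (eq_measure_integral (pushforward xi snd)); last by move=> A mA _; symmetry; apply: pf.
rewrite integral_pushforward//; last exact/measurable_EFinP.
Qed.

Lemma Q_lip {R : realType} {dT : measure_display} {X : measurableType dT}
  (d : X -> X -> R) (P : X -> probability X R) (c : R) (g : X -> R) (l : R) :
  (@measurable _ X) = <<s d_open d >> -> is_metric d ->
  (forall y, (\int[P y]_z (d y z)%:E < +oo)%E) ->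
  (forall y z, (W1 d (P y) (P z) <= ((c * d y z)%:E))%E) ->
  0 <= l -> (forall u v, `|g u - g v| <= l * d u v) ->
  (forall y, \int[P y]_z (g z)%:E = (fine (\int[P y]_z (g z)%:E))%:E)%E /\
  (forall u v, `|fine (\int[P u]_z (g z)%:E) - fine (\int[P v]_z (g z)%:E)| <= (c * l) * d u v).
Proof.
move=> hs hm hmom hW l0 hg.
have mg : measurable_fun [set: X] g by exact: lip_measurable hs l0 hg.
have ig y : (P y).-integrable [set: X] (EFin \o g) by exact: lip_integrable hs hm l0 hg (hmom y).
have fin y : (\int[P y]_z (g z)%:E = (fine (\int[P y]_z (g z)%:E))%:E)%E.
  by rewrite fineK//; exact: (integrable_fin_num measurableT (ig y)).
split => // u v.
have [l00|l00] := eqVneq l 0.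
  have gc w : g w = g u.
    by apply/eqP; rewrite -subr_eq0 -normr_eq0 eq_le normr_ge0 andbT; have := hg w u; rewrite l00 mul0r.
  have cu y : (\int[P y]_z (g z)%:E = (g u)%:E)%E.
    rewrite (eq_integral (cst (g u)%:E)); last by move=> z _; rewrite gc.
    rewrite integral_cst//; transitivity ((g u)%:E * 1)%E; last by rewrite mule1.
    by congr (_ * _)%E; exact: probability_setT.
  by rewrite !cu /= subrr normr0 l00 mulr0 mul0r.
have lp : 0 < l by rewrite lt_neqAle eq_sym l00 l0.
set a := fine _; set b := fine _.
suff : ((`|a - b| / l)%:E <= W1 d (P u) (P v))%E.
  move=> h; have := le_trans h (hW u v); rewrite lee_fin ler_pdivrMr// => h2.
  by rewrite mulrAC.
apply/ereal_infP => _ [xi hxi <-].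
have [i1 e1] := marginal_fst hxi mg (ig u).
have [i2 e2] := marginal_snd hxi mg (ig v).
pose h (p : X * X) := (g p.1 - g p.2) / l.
have mh : measurable_fun [set: X * X] (fun p => (h p)%:E).
  apply/measurable_EFinP; apply: measurable_funM => //.
  apply: measurable_funB; exact: measurableT_comp mg _.
have eh : (\int[xi]_p (h p)%:E = ((a - b) / l)%:E)%E.
  transitivity (\int[xi]_p ((l^-1)%:E * ((g p.1)%:E - (g p.2)%:E)))%E.
    by apply: eq_integral => p _; rewrite /h -EFinB -EFinM mulrC.
  rewrite integralZl//; last exact: integrableB.
  by rewrite integralB_EFin// e1 e2 (fin u) (fin v) -EFinB -EFinM mulrC.
have -> : `|a - b| / l = `|(a - b) / l|.
  by rewrite normrM (ger0_norm (x := l^-1)) // invr_ge0 ltW.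
rewrite -abse_EFin -eh.
apply: le_trans (le_abse_integral _ _ mh) _ => //.
apply: nnint_le => p; first exact: abse_ge0.
rewrite /= lee_fin /h normrM (ger0_norm (x := l^-1)); last by rewrite invr_ge0 ltW.
rewrite ler_pdivrMr// mulrC; exact: hg.
Qed.

Section inv_sec.
Import HBNNSimple.
Local Open Scope ereal_scope.

Lemma inv_indic {R : realType} {dT : measure_display} {X : measurableType dT}
  (P : X -> probability X R) (pi : probability X R) :
  (forall A, measurable A -> measurable_fun [set: X] (P ^~ A)) ->
  markov_invariant P pi -> forall E, measurable E ->
  \int[pi]_z (\1_E z)%:E = \int[pi]_y (\int[P y]_z (\1_E z)%:E).
Proof.
move=> hP hinv E mE.
rewrite integral_indic// setIT; transitivity (\int[pi]_y P y E); first by symmetry; exact: hinv.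
by apply: eq_integral => y _; rewrite integral_indic// setIT.
Qed.

Lemma inv_nnsfun {R : realType} {dT : measure_display} {X : measurableType dT}
  (P : X -> probability X R) (pi : probability X R) :
  (forall A, measurable A -> measurable_fun [set: X] (P ^~ A)) ->
  markov_invariant P pi -> forall (f : {nnsfun X >-> R}),
  \int[pi]_z (f z)%:E = \int[pi]_y (\int[P y]_z (f z)%:E).
Proof.
move=> hP hinv f.
under [in LHS]eq_integral do rewrite fimfunE -fsumEFin//.
rewrite ge0_integral_fsum//; last 2 first.
  - by move=> r; exact/measurable_EFinP/measurableT_comp.
  - by move=> r z _; rewrite EFinM nnfun_muleindic_ge0.
under [in RHS]eq_integral.
  move=> y _.
  under eq_integral.
    by move=> z _; rewrite fimfunE -fsumEFin//; over.
  rewrite /= ge0_integral_fsum//; last 2 first.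
    - by move=> r; exact/measurable_EFinP/measurableT_comp.
    - by move=> r z _; rewrite EFinM nnfun_muleindic_ge0.
  under eq_fsbigr.
    move=> r _.
    rewrite (integralZl_indic _ (fun r => f @^-1` [set r]))//; last first.
      by move=> r0; rewrite preimage_nnfun0.
    rewrite integral_indic// setIT.
    over.
  over.
rewrite /= ge0_integral_fsum//; last 2 first.
  - move=> r; apply: measurable_funeM.
    exact: hP.
  - move=> n y _.
    have := mulemu_ge0 (fun n => f @^-1` [set n]).
    by apply; exact: preimage_nnfun0.
apply: eq_fsbigr => r _.
rewrite (integralZl_indic _ (fun r => f @^-1` [set r]))//; last first.
  exact: preimage_nnfun0.
rewrite /= (inv_indic _ _ hP hinv)//.
have [r0|r0] := leP 0%R r.
  rewrite ge0_integralZl//.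
    congr (_ * _); apply: eq_integral => y _ /=. rewrite integral_indic ?setIT//.
  exact: hP.
rewrite integral0_eq ?mule0.
  by rewrite integral0_eq// => y _; rewrite preimage_nnfun0// measure0 mule0.
by move=> y _; rewrite integral0_eq// => z _; rewrite preimage_nnfun0// indic0.
Qed.

Lemma inv_ge0 {R : realType} {dT : measure_display} {X : measurableType dT}
  (P : X -> probability X R) (pi : probability X R) :
  (forall A, measurable A -> measurable_fun [set: X] (P ^~ A)) ->
  markov_invariant P pi ->
  forall f : X -> \bar R, (forall z, 0 <= f z) -> measurable_fun [set: X] f ->
  \int[pi]_y (\int[P y]_z f z) = \int[pi]_z f z.
Proof.
move=> hP hinv f f0 mf; apply/esym.
pose f_ := nnsfun_approx measurableT mf.
transitivity (\int[pi]_z (lim ((f_ n z)%:E @[n --> \oo]))).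
  by apply/eq_integral => z _; apply/esym/cvg_lim => //=; exact: cvg_nnsfun_approx.
rewrite monotone_convergence//; last 3 first.
  by move=> n; exact/measurable_EFinP.
  by move=> n z _; rewrite lee_fin.
  by move=> z _ a b ab; rewrite lee_fin; exact/lefP/nd_nnsfun_approx.
rewrite (_ : (fun _ => _) =
    (fun n => \int[pi]_y (\int[P y]_z (f_ n z)%:E)))//; last first.
  by apply/funext => n; rewrite (inv_nnsfun _ _ hP hinv).
transitivity (\int[pi]_y lim ((\int[P y]_z (f_ n z)%:E) @[n --> \oo])).
  rewrite -monotone_convergence//; last 3 first.
  - move=> n; apply: measurable_fun_integral_kernel => //.
    + by move=> z; rewrite lee_fin.
    + exact/measurable_EFinP.
  - by move=> n y _; apply: integral_ge0 => // z _; rewrite lee_fin.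
  - move=> y _ a b ab; apply: ge0_le_integral => //.
    + by move=> z _; rewrite lee_fin.
    + exact/measurable_EFinP.
    + exact/measurable_EFinP.
    + by move=> z _; rewrite lee_fin; exact/lefP/nd_nnsfun_approx.
apply: eq_integral => y _; rewrite -monotone_convergence//; last 3 first.
  - by move=> n; exact/measurable_EFinP.
  - by move=> n z _; rewrite lee_fin.
  - by move=> z _ a b ab; rewrite lee_fin; exact/lefP/nd_nnsfun_approx.
by apply: eq_integral => z _; apply/cvg_lim => //; exact: cvg_nnsfun_approx.
Qed.

End inv_sec.

Lemma max0_lip {R : realType} (a b : R) : `|Num.max a 0 - Num.max b 0| <= `|a - b|.
Proof.
rewrite !maxEle; case: (leP a 0) => ha; case: (leP b 0) => hb.
- by rewrite subrr normr0.
- rewrite sub0r normrN (gtr0_norm hb) (ler0_norm (x := a - b)); lra.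
- rewrite subr0 (gtr0_norm ha) (ger0_norm (x := a - b)); lra.
- by [].
Qed.

Lemma inv_lip {R : realType} {dT : measure_display} {X : measurableType dT}
  (d : X -> X -> R) (P : X -> probability X R) (pi : probability X R) (c : R)
  (g : X -> R) (l : R) (x0 : X) :
  (@measurable _ X) = <<s d_open d >> -> is_metric d ->
  (forall A, measurable A -> measurable_fun [set: X] (P ^~ A)) ->
  markov_invariant P pi ->
  (forall y, (\int[P y]_z (d y z)%:E < +oo)%E) ->
  (forall y z, (W1 d (P y) (P z) <= ((c * d y z)%:E))%E) ->
  0 <= c -> 0 <= l -> (forall u v, `|g u - g v| <= l * d u v) ->
  (\int[pi]_y (d x0 y)%:E < +oo)%E ->
  (\int[pi]_y (fine (\int[P y]_z (g z)%:E))%:E = \int[pi]_y (g y)%:E)%E.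
Proof.
move=> hs hm hP hinv hmom hW c0 l0 hg hpi.
pose gp z := Num.max (g z) 0; pose gn z := Num.max (- g z) 0.
have gE z : g z = gp z - gn z.
  rewrite /gp /gn; case: (leP (g z) 0) => h; case: (leP (- g z) 0) => h'; lra.
have hgp u v : `|gp u - gp v| <= l * d u v by apply: le_trans (max0_lip _ _) (hg u v).
have hgn u v : `|gn u - gn v| <= l * d u v.
  by apply: le_trans (max0_lip _ _) _; rewrite -opprD normrN; exact: hg.
have [fp lp] := Q_lip d P c gp l hs hm hmom hW l0 hgp.
have [fn ln] := Q_lip d P c gn l hs hm hmom hW l0 hgn.
have cl0 : 0 <= c * l by exact: mulr_ge0.
have ipi (k : X -> R) (lk : R) : 0 <= lk -> (forall u v, `|k u - k v| <= lk * d u v) ->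
    pi.-integrable [set: X] (EFin \o k).
  by move=> lk0 hk; exact: lip_integrable hs hm lk0 hk hpi.
have iP (y : X) (k : X -> R) (lk : R) : 0 <= lk -> (forall u v, `|k u - k v| <= lk * d u v) ->
    (P y).-integrable [set: X] (EFin \o k).
  by move=> lk0 hk; exact: lip_integrable hs hm lk0 hk (hmom y).
have mk (k : X -> R) (lk : R) : 0 <= lk -> (forall u v, `|k u - k v| <= lk * d u v) ->
    measurable_fun [set: X] (EFin \o k).
  by move=> lk0 hk; apply/measurable_EFinP; exact: lip_measurable hs lk0 hk.
have QE y : fine (\int[P y]_z (g z)%:E) =
    fine (\int[P y]_z (gp z)%:E) - fine (\int[P y]_z (gn z)%:E).
  under eq_integral do rewrite gE EFinB.
  rewrite integralB_EFin//; [|exact: (iP y _ l)|exact: (iP y _ l)].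
  by rewrite (fp y) (fn y).
under eq_integral do rewrite QE EFinB.
rewrite integralB_EFin//; [|exact: (ipi _ (c * l))|exact: (ipi _ (c * l))].
rewrite [in RHS](eq_integral (fun y => (gp y)%:E - (gn y)%:E)%E); last first.
  by move=> y _; rewrite gE EFinB.
rewrite [in RHS]integralB_EFin//; [|exact: (ipi _ l)|exact: (ipi _ l)].
congr (_ - _)%E.
- under eq_integral do rewrite -fp.
  apply: inv_ge0 => //; last exact: (mk _ l).
  by move=> z; rewrite lee_fin /gp le_max lexx orbT.
- under eq_integral do rewrite -fn.
  apply: inv_ge0 => //; last exact: (mk _ l).
  by move=> z; rewrite lee_fin /gn le_max lexx orbT.
Qed.

Fixpoint gseq {R : realType} {dT : measure_display} {X : measurableType dT}
  (P : X -> probability X R) (f : X -> R) (k : nat) : X -> R :=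
  match k with
  | 0 => f
  | k'.+1 => fun y => fine (\int[P y]_z (gseq P f k' z)%:E)%E
  end.

Lemma gseq_props {R : realType} {dT : measure_display} {X : measurableType dT}
  (d : X -> X -> R) (P : X -> probability X R) (c : R) (f : X -> R) (l : R) :
  (@measurable _ X) = <<s d_open d >> -> is_metric d ->
  (forall y, (\int[P y]_z (d y z)%:E < +oo)%E) ->
  (forall y z, (W1 d (P y) (P z) <= ((c * d y z)%:E))%E) ->
  0 <= c -> 0 <= l -> (forall u v, `|f u - f v| <= l * d u v) ->
  forall k, (forall y, chain_expect P k f y = (gseq P f k y)%:E) /\
    (forall u v, `|gseq P f k u - gseq P f k v| <= (c ^+ k * l) * d u v).
Proof.
move=> hs hm hmom hW c0 l0 hf; elim => [|k [IH1 IH2]].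
  by split => // u v; rewrite expr0 mul1r.
have ck0 : 0 <= c ^+ k * l by rewrite mulr_ge0 ?exprn_ge0.
have [q1 q2] := Q_lip d P c (gseq P f k) _ hs hm hmom hW ck0 IH2.
split.
  move=> y; rewrite /chain_expect iterS /markov_op.
  transitivity (\int[P y]_z (gseq P f k z)%:E)%E; last exact: q1.
  by apply: eq_integral => z _; exact: IH1 z.
by move=> u v; rewrite exprS -(mulrA c); exact: q2.
Qed.

Lemma gseq_pi {R : realType} {dT : measure_display} {X : measurableType dT}
  (d : X -> X -> R) (P : X -> probability X R) (pi : probability X R) (c : R)
  (f : X -> R) (l : R) (x0 : X) :
  (@measurable _ X) = <<s d_open d >> -> is_metric d ->
  (forall A, measurable A -> measurable_fun [set: X] (P ^~ A)) ->
  markov_invariant P pi ->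
  (forall y, (\int[P y]_z (d y z)%:E < +oo)%E) ->
  (forall y z, (W1 d (P y) (P z) <= ((c * d y z)%:E))%E) ->
  0 <= c -> 0 <= l -> (forall u v, `|f u - f v| <= l * d u v) ->
  (\int[pi]_y (d x0 y)%:E < +oo)%E ->
  forall k, (\int[pi]_y (gseq P f k y)%:E = \int[pi]_y (f y)%:E)%E.
Proof.
move=> hs hm hP hinv hmom hW c0 l0 hf hpi; elim => [//|k IH].
have ck0 : 0 <= c ^+ k * l by rewrite mulr_ge0 ?exprn_ge0.
have [_ h2] := gseq_props d P c f l hs hm hmom hW c0 l0 hf k.
rewrite -IH /=.
exact: (inv_lip d P pi c (gseq P f k) (c ^+ k * l) x0).
Qed.

Lemma gseq_bound {R : realType} {dT : measure_display} {X : measurableType dT}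
  (d : X -> X -> R) (pi : probability X R) (g : X -> R) (lk e pf : R) (x : X) :
  (@measurable _ X) = <<s d_open d >> -> is_metric d ->
  0 <= lk -> (forall u v, `|g u - g v| <= lk * d u v) ->
  (\int[pi]_y (d x y)%:E = e%:E)%E ->
  (\int[pi]_y (g y)%:E = pf%:E)%E ->
  `|g x - pf| <= lk * e.
Proof.
move=> hs hm lk0 hg he hpf.
have hfin : (\int[pi]_y (d x y)%:E < +oo)%E by rewrite he ltry.
have ig : pi.-integrable [set: X] (EFin \o g) by exact: lip_integrable hs hm lk0 hg hfin.
have ic : pi.-integrable [set: X] (EFin \o cst (g x)) by exact: finite_measure_integrable_cst.
have md : measurable_fun [set: X] (d x) by exact: (lip_measurable hs ler01 (metric_lip1 x hm)).
have mg : measurable_fun [set: X] g by exact: lip_measurable hs lk0 hg.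
have e1 : ((g x - pf)%:E = \int[pi]_y ((g x)%:E - (g y)%:E))%E.
  rewrite integralB_EFin// EFinB -hpf; congr (_ - _)%E.
  rewrite (_ : (fun y => (g x)%:E) = cst (g x)%:E)//.
  rewrite integral_cst//; transitivity ((g x)%:E * 1)%E; first by rewrite mule1.
  by congr (_ * _)%E; apply/esym; exact: probability_setT.
rewrite -lee_fin -abse_EFin e1.
apply: le_trans (le_abse_integral _ _ _) _ => //.
  by apply/measurable_EFinP; apply: measurable_funB => //; exact: measurable_cst.
rewrite EFinM -he -integralZl//; last first.
  apply/integrableP; split; first exact/measurable_EFinP.
  rewrite (eq_integral (fun y => (d x y)%:E)) ?he ?ltry// => y _.
  by rewrite /= ger0_norm//; case: hm => + _ _ _; apply.
apply: ge0_le_integral => //.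
- apply: measurableT_comp => //; apply: emeasurable_funB => //; exact/measurable_EFinP.
- by apply: measurable_funeM; exact/measurable_EFinP.
- by move=> y _; rewrite /= -EFinM lee_fin; exact: hg.
Qed.

Lemma geom_sum {R : realType} (c : R) (a n : nat) :
  (1 - c) * \sum_(a <= k < a + n) c ^+ k = c ^+ a - c ^+ (a + n).
Proof.
elim: n => [|n IH].
  by rewrite addn0 big_geq// mulr0 subrr.
rewrite addnS big_nat_recr/= ?leq_addr// mulrDr IH exprS.
ring.
Qed.

Lemma geom_le {R : realType} (c : R) (a n : nat) : 0 <= c -> c < 1 ->
  \sum_(a <= k < a + n) c ^+ k <= c ^+ a / (1 - c).
Proof.
move=> c0 c1.
rewrite ler_pdivlMr ?subr_gt0// mulrC geom_sum.
by rewrite lerBlDr lerDl exprn_ge0.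
Qed.

Lemma const_case {R : realType} {dT : measure_display} {X : measurableType dT}
  (P : X -> probability X R) (pi : probability X R) (Tn T0 : nat) (f : X -> R)
  (x : X) (a : R) : (1 <= Tn)%N -> (forall y, f y = a) ->
  (`| expect_hatpi P Tn T0 f x - \int[pi]_y (f y)%:E | = 0)%E.
Proof.
move=> hT hf.
have ic (mu : probability X R) : (\int[mu]_z (cst a%:E) z = a%:E)%E.
  rewrite integral_cst//; transitivity (a%:E * 1)%E; last by rewrite mule1.
  by congr (_ * _)%E; exact: probability_setT.
have ce k y : chain_expect P k f y = a%:E.
  elim: k y => [|k IH] y; first by rewrite /chain_expect /= hf.
  rewrite /chain_expect iterS /markov_op.
  transitivity (\int[P y]_z (cst a%:E) z)%E; last exact: ic.
  by apply: eq_integral => z _; exact: IH z.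
have ipi : (\int[pi]_y (f y)%:E = a%:E)%E.
  transitivity (\int[pi]_z (cst a%:E) z)%E; last exact: ic.
  by apply: eq_integral => z _; rewrite hf.
rewrite ipi /expect_hatpi (eq_bigr (fun _ => a%:E)); last by move=> k _; exact: ce.
rewrite sumEFin sumr_const_nat subSS addKn -EFinM -[a *+ Tn]mulr_natr mulrCA mulVf ?mulr1.
  by rewrite subee// abse0.
by rewrite pnatr_eq0 -lt0n.
Qed.

Theorem proposition1 (R : realType) (dT : measure_display) (X : measurableType dT)
  (d : X -> X -> R) (P : X -> probability X R) (kappa : R)
  (pi : probability X R) (Tn T0 : nat) (f : X -> R) (x : X) :
  polish_borel d ->
  (forall A, measurable A -> measurable_fun [set: X] (P ^~ A)) ->
  (forall y, (\int[P y]_z (d y z)%:E < +oo)%E) ->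
  0 < kappa ->
  (forall y z, (W1 d (P y) (P z) <= ((1 - kappa) * d y z)%:E)%E) ->
  markov_invariant P pi ->
  (1 <= Tn)%N ->
  (lip_norm d f < +oo)%E ->
  (`| expect_hatpi P Tn T0 f x - \int[pi]_y (f y)%:E |
     <= ((1 - kappa) ^+ T0.+1 / (kappa * Tn%:R))%:E
        * eccentricity d pi x * lip_norm d f)%E.
Proof.
move=> [hm _ _ hs] hP hmom k0 hW hinv hT hlip.
have dge0 u v : 0 <= d u v by case: hm => + _ _ _; apply.
have [_ deq _ _] := hm.
have duu u : d u u = 0 by exact: (deq u u).2.
have L0 : (0 <= lip_norm d f)%E by apply: ereal_sup_ubound; left.
have [l Ll] : exists l, lip_norm d f = l%:E.
  by exists (fine (lip_norm d f)); rewrite fineK// ge0_fin_numE.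
have l0 : 0 <= l by rewrite -lee_fin -Ll.
have hf u v : `|f u - f v| <= l * d u v.
  have [->|uv] := eqVneq u v; first by rewrite subrr normr0 duu mulr0.
  have dp : 0 < d u v.
    rewrite lt_neqAle dge0 andbT eq_sym; apply/eqP => h.
    by move/eqP: uv; apply; exact: (deq u v).1.
  rewrite -ler_pdivrMr// -lee_fin -Ll.
  by apply: ereal_sup_ubound; right; exists u, v; split => //; exact/eqP.
have E0 : (0 <= eccentricity d pi x)%E by apply: integral_ge0 => y _; rewrite lee_fin.
have [k1|k1] := ltP 1 kappa.
  have allx y : y = x.
    have W0 : (0 <= W1 d (P y) (P x))%E.
      by apply/ereal_infP => _ [xi _ <-]; apply: integral_ge0 => p _; rewrite lee_fin.
    have := le_trans W0 (hW y x); rewrite lee_fin => h.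
    have : d y x = 0.
      apply/eqP; rewrite eq_le dge0 andbT.
      by rewrite -(@ler_nM2l _ (1 - kappa)) ?subr_lt0// mulr0.
    by move/(deq y x).
  rewrite (const_case _ _ _ _ _ _ (f x))//; last by move=> y; rewrite (allx y).
  rewrite /eccentricity (eq_integral (cst 0%E)); last by move=> y _; rewrite (allx y) duu.
  by rewrite integral0 mule0 mul0e.
set c := 1 - kappa.
have c0 : 0 <= c by rewrite subr_ge0.
have c1 : c < 1 by rewrite ltrBlDr ltrDl.
have [l00|lp] := eqVneq l 0.
  rewrite (const_case _ _ _ _ _ _ (f x))//; last first.
    move=> y; apply/eqP; rewrite -subr_eq0 -normr_eq0 eq_le normr_ge0 andbT.
    by have := hf y x; rewrite l00 mul0r.
  by rewrite Ll l00 mule0.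
have lpos : 0 < l by rewrite lt_neqAle eq_sym lp l0.
have kc : 1 - c = kappa by rewrite /c; ring.
have Tn0 : Tn%:R != 0 :> R by rewrite pnatr_eq0 -lt0n.
have hmx := metric_lip1 x hm.
have mdx : measurable_fun [set: X] (d x) by exact: (lip_measurable hs ler01 hmx).
case E : (eccentricity d pi x) => [e| |]; last by rewrite E in E0.
  have e0 : 0 <= e by rewrite -lee_fin -E.
  have hpi : (\int[pi]_y (d x y)%:E < +oo)%E by move: E; rewrite /eccentricity => ->; rewrite ltry.
  have [pf hpf] : exists pf, (\int[pi]_y (f y)%:E = pf%:E)%E.
    exists (fine (\int[pi]_y (f y)%:E)); rewrite fineK//.
    exact: (integrable_fin_num measurableT (lip_integrable d pi f l x hs hm l0 hf hpi)).
  have props k := gseq_props d P c f l hs hm hmom hW c0 l0 hf k.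
  have pis k := gseq_pi d P pi c f l x hs hm hP hinv hmom hW c0 l0 hf hpi k.
  have bnd k : `|gseq P f k x - pf| <= c ^+ k * l * e.
    apply: (gseq_bound d pi (gseq P f k) (c ^+ k * l) e pf x hs hm _ (props k).2 E).
      by rewrite mulr_ge0 ?exprn_ge0.
    by rewrite pis.
  rewrite /expect_hatpi (eq_bigr (fun k => (gseq P f k x)%:E)); last by move=> k _; exact: (props k).1.
  rewrite sumEFin hpf Ll -!EFinM -EFinB abse_EFin lee_fin.
  have hS : Tn%:R^-1 * (\sum_(T0.+1 <= k < (T0 + Tn).+1) gseq P f k x) - pf =
      Tn%:R^-1 * (\sum_(T0.+1 <= k < (T0 + Tn).+1) (gseq P f k x - pf)).
    rewrite sumrB sumr_const_nat subSS addKn mulrBr -[pf *+ Tn]mulr_natr mulrCA mulVf ?mulr1//.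
  rewrite hS normrM (ger0_norm (x := Tn%:R^-1)); last by rewrite invr_ge0.
  apply: le_trans (ler_wpM2l _ (ler_norm_sum _ _ _)) _; first by rewrite invr_ge0.
  apply: le_trans (ler_wpM2l _ (ler_sum _ (fun k _ => bnd k))) _; first by rewrite invr_ge0.
  under eq_bigr do rewrite -mulrA.
  rewrite -mulr_suml -addSn.
  have -> : c ^+ T0.+1 / (kappa * Tn%:R) * e * l = Tn%:R^-1 * (c ^+ T0.+1 / (1 - c) * (l * e)).
    rewrite kc; field; apply/andP; split => //; exact: lt0r_neq0.
  apply: ler_wpM2l; first by rewrite invr_ge0.
  apply: ler_wpM2r; first exact: mulr_ge0.
  exact: geom_le.
have cpos : 0 < c.
  rewrite lt_neqAle c0 andbT; apply/eqP => c00.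
  have [q1 q2] := Q_lip d P c (d x) 1 hs hm hmom hW ler01 hmx.
  have qc y : fine (\int[P y]_z (d x z)%:E) = fine (\int[P x]_z (d x z)%:E).
    apply/eqP; rewrite -subr_eq0 -normr_eq0 eq_le normr_ge0 andbT.
    by have := q2 y x; rewrite -c00 !mul0r.
  move: E; rewrite /eccentricity -(inv_ge0 P pi hP hinv); last 2 first.
  - by move=> z; rewrite lee_fin.
  - exact/measurable_EFinP.
  rewrite (eq_integral (cst (fine (\int[P x]_z (d x z)%:E))%:E)); last first.
    by move=> y _; rewrite q1 qc.
  rewrite integral_cst// => h.
  have : ((fine (\int[P x]_z (d x z)%:E))%:E * 1 = +oo)%E.
    by rewrite -h; congr (_ * _)%E; apply/esym; exact: probability_setT.
  by rewrite mule1.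
have cf : 0 < c ^+ T0.+1 / (kappa * Tn%:R).
  by apply: divr_gt0; [exact: exprn_gt0|apply: mulr_gt0 => //; rewrite ltr0n].
rewrite Ll (muleC _ +oo%E) gt0_mulye ?lte_fin// gt0_mulye ?lte_fin//.
exact: leey.
Qed.
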